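(* Let $C$ be a cycle of goods with at most $8$ goods and let three agents have arbitrary utility functions on $C$. Then an mms-allocation of the goods of $C$ to the three agents exists.
   Context: A cycle of goods has goods $v_1,\dots,v_m$ as vertices and edges $v_iv_{i+1}$ ($1\le i<m$) and $v_mv_1$. A utility function assigns a non-negative real to each good, extended additively to sets. A bundle is a set of goods inducing a connected subgraph (empty allowed); an $n$-split is a sequence of $n$ pairwise disjoint bundles (possibly empty) with union all goods. $\mathrm{mms}^{(n)}(C,u)=\max_{P_1,\dots,P_n}\min_i u(P_i)$ over all $n$-splits. An allocation to agents $1,\dots,n$ with utilities $u_1,\dots,u_n$ is an $n$-split $P_1,\dots,P_n$ with $P_i$ given to agent $i$; it is an mms-allocation if $u_i(P_i)\ge\mathrm{mms}^{(n)}(C,u_i)$ for all $i$. *)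

(* Defs.v *)
(* Utilities take values in an arbitrary real field R
   (the paper: non-negative reals). *)
From HB Require Import structures.
From mathcomp Require Import all_boot all_order all_algebra.
Set Implicit Arguments. Unset Strict Implicit. Unset Printing Implicit Defensive.
Import Order.TTheory GRing.Theory Num.Theory.
Local Open Scope ring_scope.

(* The cycle of goods C_m: goods are 'I_m (v_1..v_m ~ 0..m-1), with edges
   {i, i+1 mod m}. *)
Definition cycle_adj (m : nat) (x y : 'I_m) : bool :=
  ((x.+1 %% m)%N == y) || ((y.+1 %% m)%N == x).

Definition connected_set (m : nat) (S : {set 'I_m}) : bool :=
  [forall x in S, forall y in S,
     connect [rel a b | [&& a \in S, b \in S & cycle_adj a b]] x y].

Definition is_split (m n : nat) (P : {ffun 'I_n -> {set 'I_m}}) : bool :=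
  [&& [forall i, connected_set (P i)],
      [forall i, forall j, (i != j) ==> [disjoint P i & P j]]
    & \bigcup_(i < n) P i == [set: 'I_m]].

Definition util (R : realFieldType) (m : nat) (u : 'I_m -> R) (S : {set 'I_m}) : R :=
  \sum_(g in S) u g.

(* The min uses u(all goods) as neutral element (an upper bound of every
   bundle value, so for n >= 1 this is the true minimum); the max uses 0 as
   neutral element (utilities are non-negative and an n-split exists). *)
Definition mms (R : realFieldType) (m n : nat) (u : 'I_m -> R) : R :=
  \big[Num.max/0]_(P : {ffun 'I_n -> {set 'I_m}} | is_split P)
     \big[Num.min/util u [set: 'I_m]]_(i < n) util u (P i).

(* Main.v *)
Require Import Defs.
From HB Require Import structures.
From mathcomp Require Import all_boot all_order all_algebra.
Import Order.TTheory GRing.Theory Num.Theory.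
Set Implicit Arguments. Unset Strict Implicit. Unset Printing Implicit Defensive.
Local Open Scope nat_scope.

Section C.
Variable m : nat.
Definition arcb (s l : nat) : seq bool := mkseq (fun x => (x + m - s) %% m < l) m.
Definition arcs : seq (seq bool) :=
  undup (nseq m false :: nseq m true :: [seq arcb s l | s <- iota 0 m, l <- iota 0 m.+1]).
Fixpoint part3 (a b c : seq bool) : bool :=
  match a, b, c with
  | x :: a', y :: b', z :: c' =>
      [&& (x + y + z == 1)%N & part3 a' b' c']
  | [::], [::], [::] => true
  | _, _, _ => false
  end.
Fixpoint hasL {T} (a : T -> bool) (s : seq T) : bool :=
  match s with [::] => false | x :: s' => if a x then true else hasL a s' end.
Fixpoint allL {T} (a : T -> bool) (s : seq T) : bool :=
  match s with [::] => true | x :: s' => if a x then allL a s' else false end.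
Definition trip := (seq bool * seq bool * seq bool)%type.
Definition cmp (a b : seq bool) : seq bool := [seq ~~ (xy.1 || xy.2) | xy <- zip a b].
Definition OSof (A : seq (seq bool)) : seq trip :=
  flatten [seq [seq ((a, b), cmp a b) | b <- A & part3 a b (cmp a b) && (cmp a b \in A)] | a <- A].
Definition USof (A : seq (seq bool)) (O : seq trip) : seq trip :=
  [seq t <- O | (index t.1.1 A <= index t.1.2 A <= index t.2 A)%N].
Definition bl (t : trip) : seq (seq bool) := [:: t.1.1; t.1.2; t.2].
Definition subb (v w : seq bool) : bool := all2 implb v w.
Definition dirL (L : seq (seq bool)) (a : seq bool) := hasL (fun b => subb b a) L.
Definition lvl0 (O : seq trip) (L1 L2 L3 : seq (seq bool)) : bool :=
  hasL (fun p => dirL L3 p.2) [seq p <- O | dirL L1 p.1.1 && dirL L2 p.1.2].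
Definition lvl1 (O U : seq trip) (L1 L2 L3 : seq (seq bool)) : bool :=
  let O23 := [seq p <- O | dirL L2 p.1.2 && dirL L3 p.2] in
  let O13 := [seq p <- O | dirL L1 p.1.1 && dirL L3 p.2] in
  let O12 := [seq p <- O | dirL L1 p.1.1 && dirL L2 p.1.2] in
  hasL (fun X => if allL (fun x => hasL (fun p => subb x p.1.1) O23) (bl X) then true else
                 if allL (fun x => hasL (fun p => subb x p.1.2) O13) (bl X) then true else
                 allL (fun x => hasL (fun p => subb x p.2) O12) (bl X)) U.
Definition checkOU (O U : seq trip) : bool :=
  allL (fun u1 => allL (fun u2 =>
    let OS12 := [seq p <- O | dirL (bl u1) p.1.1 && dirL (bl u2) p.1.2] in
    allL (fun u3 => if hasL (fun p => dirL (bl u3) p.2) OS12 then true else lvl1 O U (bl u1) (bl u2) (bl u3)) U) U) U.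
Definition check : bool :=
  let A := arcs in let O := OSof A in let U := USof A O in checkOU O U.
Definition pos (y x : nat) : nat := (x + m - y) %% m.
Definition side (y1 y2 x : nat) : bool := pos y1 x < pos y1 y2.
Definition K3b : bool :=
  allL (fun y1 => allL (fun y2 => if y1 == y2 then true else
    allL (fun a => let b := a.+1 %% m in
      if [|| a == y1, a == y2, b == y1 | b == y2] then true
      else side y1 y2 a == side y1 y2 b) (iota 0 m)) (iota 0 m)) (iota 0 m).
Definition cut_ok (v : seq bool) : bool :=
  allL (fun y1 => allL (fun y2 =>
    if [|| y1 == y2, nth false v y1 | nth false v y2] then true else
    allL (fun x1 => allL (fun x2 =>
      if nth false v x1 && nth false v x2 then side y1 y2 x1 == side y1 y2 x2 else true)
      (iota 0 m)) (iota 0 m)) (iota 0 m)) (iota 0 m).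
Fixpoint allvecs (n : nat) : seq (seq bool) :=
  if n is n'.+1 then [seq b :: v | b <- [:: true; false], v <- allvecs n'] else [:: [::]].
Definition K4b (A : seq (seq bool)) : bool :=
  allL (fun v => if cut_ok v then v \in A else true) (allvecs m).
Definition walk (x y : nat) : seq nat := [seq (x + k) %% m | k <- iota 1 ((y + m - x) %% m)].
Definition walk_ok (v : seq bool) (x : nat) (ps : seq nat) (y : nat) : bool :=
  path (fun a b => [&& nth false v b, b < m & (a.+1 %% m == b)]) x ps && (last x ps == y).
Definition K2b (A : seq (seq bool)) : bool :=
  allL (fun v => allL (fun x => allL (fun y =>
    if nth false v x && nth false v y then
      (if walk_ok v x (walk x y) y then true else walk_ok v y (walk y x) x) else true)
    (iota 0 m)) (iota 0 m)) A.
Definition check_all : bool :=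
  let A := arcs in let O := OSof A in let U := USof A O in
  [&& allL (fun v => size v == m) A, K2b A, K3b, K4b A,
      allL (fun t => hasL (fun u => perm_eq (bl t) (bl u)) U) O, U != [::] & checkOU O U].
End C.



Lemma hasLE T (a : T -> bool) s : hasL a s = has a s.
Proof. by elim: s => //= x s ->; case: (a x). Qed.
Lemma allLE T (a : T -> bool) s : allL a s = all a s.
Proof. by elim: s => //= x s ->; case: (a x). Qed.

Section Sound.
Variable F : nat -> seq bool -> Prop.
Hypothesis Fup : forall i v w, subb v w -> F i v -> F i w.

Lemma dirL_sound i L a : (forall b, b \in L -> F i b) -> dirL L a -> F i a.
Proof. by move=> HL; rewrite /dirL hasLE => /hasP [b bL sb]; exact: Fup sb (HL b bL). Qed.

Definition Good (O : seq trip) :=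
  exists2 p, p \in O & [/\ F 0 p.1.1, F 1 p.1.2 & F 2 p.2].

Lemma lvl1_sound O U L1 L2 L3 :
  (forall i X, (i < 3)%N -> X \in U -> exists2 x, x \in bl X & F i x) ->
  (forall b, b \in L1 -> F 0 b) -> (forall b, b \in L2 -> F 1 b) ->
  (forall b, b \in L3 -> F 2 b) ->
  lvl1 O U L1 L2 L3 -> Good O.
Proof.
move=> F3 H1 H2 H3; rewrite /lvl1 hasLE => /hasP [X XU].
have [x0 xX0 Fx0] := F3 0%N X erefl XU.
have [x1 xX1 Fx1] := F3 1%N X erefl XU.
have [x2 xX2 Fx2] := F3 2%N X erefl XU.
case: ifP => [E _ | _].
  move: E; rewrite allLE => /allP/(_ x0 xX0); rewrite hasLE => /hasP [p].
  rewrite mem_filter => /andP [/andP [d2 d3] pO] s1.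
  by exists p => //; split; [exact: Fup s1 Fx0 | exact: dirL_sound H2 d2 | exact: dirL_sound H3 d3].
case: ifP => [E _ | _ E].
  move: E; rewrite allLE => /allP/(_ x1 xX1); rewrite hasLE => /hasP [p].
  rewrite mem_filter => /andP [/andP [d1 d3] pO] s1.
  by exists p => //; split; [exact: dirL_sound H1 d1 | exact: Fup s1 Fx1 | exact: dirL_sound H3 d3].
move: E; rewrite allLE => /allP/(_ x2 xX2); rewrite hasLE => /hasP [p].
rewrite mem_filter => /andP [/andP [d1 d2] pO] s1.
by exists p => //; split; [exact: dirL_sound H1 d1 | exact: dirL_sound H2 d2 | exact: Fup s1 Fx2].
Qed.

Lemma checkOU_sound O U : checkOU O U ->
  (forall i X, (i < 3)%N -> X \in U -> exists2 x, x \in bl X & F i x) ->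
  forall u1 u2 u3, u1 \in U -> u2 \in U -> u3 \in U ->
  (forall b, b \in bl u1 -> F 0 b) -> (forall b, b \in bl u2 -> F 1 b) ->
  (forall b, b \in bl u3 -> F 2 b) -> Good O.
Proof.
rewrite /checkOU allLE => /allP H F3 u1 u2 u3 U1 U2 U3 H1 H2 H3.
move: (H u1 U1); rewrite allLE => /allP /(_ u2 U2) /=; rewrite allLE => /allP /(_ u3 U3).
case: ifP => [E _ | _]; last exact: lvl1_sound.
move: E; rewrite hasLE => /hasP [p]; rewrite mem_filter => /andP [/andP [d1 d2] pO] d3.
by exists p => //; split; [exact: dirL_sound H1 d1 | exact: dirL_sound H2 d2 | exact: dirL_sound H3 d3].
Qed.
End Sound.

Lemma subb_nth v w : subb v w -> forall i, nth false v i -> nth false w i.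
Proof.
elim: v w => [|a v IH] [|b w] //=; try by move=> _ i; rewrite ?nth_nil.
move=> /andP [ab sw] [|i] /=; last exact: IH.
by move: ab; case: a; case: b.
Qed.

Lemma part3_spec a b c : part3 a b c ->
  [/\ size a = size b, size b = size c &
      forall i, (nth false a i + nth false b i + nth false c i = (i < size a))%N].
Proof.
elim: a b c => [|x a IH] [|y b] [|z c] //=.
  by move=> _; split => // i; rewrite !nth_nil.
move=> /andP [/eqP H /IH [-> -> Hi]]; split => // [[|i]] //=.
Qed.

Lemma part3_intro a b c : size a = size b -> size b = size c ->
  (forall i, (i < size a)%N -> (nth false a i + nth false b i + nth false c i = 1)%N) ->
  part3 a b c.
Proof.
elim: a b c => [|x a IH] [|y b] [|z c] //= [Hab] [Hbc] Hi.
rewrite (Hi 0%N erefl) eqxx /=; apply: IH => // i Hia.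
exact: (Hi i.+1).
Qed.

Lemma part3_cmp a b c : part3 a b c -> cmp a b = c.
Proof.
elim: a b c => [|x a IH] [|y b] [|z c] //= /andP [H /IH].
rewrite /cmp /= => ->; congr (_ :: _).
by move: H; case: x; case: y; case: z.
Qed.

Lemma mem_OSof A a b c : a \in A -> b \in A -> c \in A -> part3 a b c ->
  ((a, b), c) \in OSof A.
Proof.
move=> aA bA cA H; rewrite /OSof; apply/flattenP.
exists [seq ((a, b0), cmp a b0) | b0 <- A & part3 a b0 (cmp a b0) && (cmp a b0 \in A)].
  by apply/mapP; exists a.
apply/mapP; exists b; last by rewrite (part3_cmp H).
by rewrite mem_filter (part3_cmp H) H cA.
Qed.

Lemma OSofP A t : t \in OSof A ->
  [/\ t.1.1 \in A, t.1.2 \in A, t.2 \in A & part3 t.1.1 t.1.2 t.2].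
Proof.
rewrite /OSof => /flattenP [s /mapP [a aA ->]] /mapP [b].
by rewrite mem_filter => /andP [/andP [H cA] bA] ->.
Qed.

Lemma USof_sub A O t : t \in USof A O -> t \in O.
Proof. by rewrite mem_filter => /andP []. Qed.

Section Sets.
Variable m : nat.
Definition set_of (v : seq bool) : {set 'I_m} := [set x : 'I_m | nth false v x].
Definition bitsOf (X : {set 'I_m}) : seq bool := [seq x \in X | x <- enum 'I_m].

Lemma size_bitsOf X : size (bitsOf X) = m.
Proof. by rewrite size_map size_enum_ord. Qed.

Lemma nth_bitsOf X (x : 'I_m) : nth false (bitsOf X) x = (x \in X).
Proof. by rewrite /bitsOf (nth_map x) ?size_enum_ord // nth_ord_enum. Qed.

Lemma set_of_bitsOf X : set_of (bitsOf X) = X.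
Proof. by apply/setP => x; rewrite inE nth_bitsOf. Qed.

Lemma in_set_of v (x : 'I_m) : (x \in set_of v) = nth false v x.
Proof. by rewrite inE. Qed.

Definition erel (S : {set 'I_m}) := [rel a b | [&& a \in S, b \in S & cycle_adj a b]].

Lemma walk_connect v (x : 'I_m) ps (y : 'I_m) :
  walk_ok m v x ps y -> nth false v x -> connect (erel (set_of v)) x y.
Proof.
elim: ps x => [|p ps IH] x /=.
  by rewrite /walk_ok /= => /eqP /val_inj -> _; exact: connect0.
rewrite /walk_ok /= => /andP [/andP [/and3P [vp pm xp] pth] lst] vx.
pose P := insubd x p : 'I_m.
have vP : val P = p by rewrite val_insubd pm.
apply: (connect_trans (y := P)).
  apply: connect1; rewrite /= !in_set_of vx vP vp /= /cycle_adj vP xp //.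
apply: IH; last by rewrite vP.
by rewrite /walk_ok vP pth lst.
Qed.

Lemma erel_sym S : symmetric (erel S).
Proof.
move=> a b; rewrite /= /cycle_adj.
by apply/idP/idP => /and3P [-> -> /orP [->|->]]; rewrite ?orbT.
Qed.

Lemma arcs_connected A v : K2b m A -> v \in A -> connected_set (set_of v).
Proof.
rewrite /K2b allLE => /allP H vA.
apply/forallP => x; apply/implyP; rewrite in_set_of => vx.
apply/forallP => y; apply/implyP; rewrite in_set_of => vy.
have := H v vA; rewrite allLE => /allP /(_ (val x)); rewrite mem_iota /= ltn_ord => /(_ isT).
rewrite allLE => /allP /(_ (val y)); rewrite mem_iota /= ltn_ord => /(_ isT).
rewrite vx vy /=; case: ifP => [W _ | _ W].
  exact: (walk_connect W vx).
rewrite (sym_connect_sym (@erel_sym _)).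
exact: (walk_connect W vy).
Qed.
End Sets.

Lemma allvecsP n v : size v = n -> v \in allvecs n.
Proof.
elim: n v => [|n IH] [|b v] // [Hv].
have := @allpairs_f _ _ _ (fun b v => b :: v) [:: true; false] (allvecs n) b v.
by apply; [case: b | exact: IH].
Qed.

Section Sets2.
Variable m : nat.

Lemma connected_cut (X : {set 'I_m}) : K3b m -> connected_set X -> cut_ok m (bitsOf X).
Proof.
move=> K3 conn.
rewrite /cut_ok allLE; apply/allP => y1; rewrite mem_iota /= => y1m.
rewrite allLE; apply/allP => y2; rewrite mem_iota /= => y2m.
case: ifP => // /norP [ne /norP [ny1 ny2]].
rewrite allLE; apply/allP => x1; rewrite mem_iota /= => x1m.
rewrite allLE; apply/allP => x2; rewrite mem_iota /= => x2m.
case: ifP => // /andP [vx1 vx2].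
pose Y1 := Ordinal y1m; pose Y2 := Ordinal y2m.
pose X1 := Ordinal x1m; pose X2 := Ordinal x2m.
have eY1 : (Y1 \in X) = false by rewrite -nth_bitsOf (negbTE ny1).
have eY2 : (Y2 \in X) = false by rewrite -nth_bitsOf (negbTE ny2).
have eX1 : X1 \in X by rewrite -nth_bitsOf.
have eX2 : X2 \in X by rewrite -nth_bitsOf.
move: conn => /forallP /(_ X1) /implyP /(_ eX1) /forallP /(_ X2) /implyP /(_ eX2) Hc.
have cl : closed (erel X) (fun x : 'I_m => side m y1 y2 x).
  move=> a b /and3P [aX bX adj]; rewrite /in_mem /=.
  have K : forall a : 'I_m, a \in X -> forall b : 'I_m, b \in X ->
      (a.+1 %% m == b)%N -> side m y1 y2 a = side m y1 y2 b.
    move=> a0 a0X b0 b0X /eqP ab.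
    move: K3; rewrite /K3b allLE => /allP /(_ y1); rewrite mem_iota /= => /(_ y1m).
    rewrite allLE => /allP /(_ y2); rewrite mem_iota /= => /(_ y2m).
    rewrite (negbTE ne) allLE => /allP /(_ a0); rewrite mem_iota /= ltn_ord => /(_ isT).
    rewrite ab.
    have na1 : (a0 == y1 :> nat) = false.
      by apply/negbTE; apply: contraFN eY1 => /eqP h; rewrite -(@val_inj _ _ _ a0 Y1) //.
    have na2 : (a0 == y2 :> nat) = false.
      by apply/negbTE; apply: contraFN eY2 => /eqP h; rewrite -(@val_inj _ _ _ a0 Y2) //.
    have nb1 : (b0 == y1 :> nat) = false.
      by apply/negbTE; apply: contraFN eY1 => /eqP h; rewrite -(@val_inj _ _ _ b0 Y1) //.
    have nb2 : (b0 == y2 :> nat) = false.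
      by apply/negbTE; apply: contraFN eY2 => /eqP h; rewrite -(@val_inj _ _ _ b0 Y2) //.
    by rewrite na1 na2 nb1 nb2 /= => /eqP.
  case/orP: adj => adj; first exact: K.
  by apply/esym; apply: K.
have := closed_connect cl Hc; rewrite /in_mem /= => ->.
by [].
Qed.

Lemma connected_arc A (X : {set 'I_m}) : K3b m -> K4b m A -> connected_set X ->
  bitsOf X \in A.
Proof.
move=> K3 K4 conn.
move: K4; rewrite /K4b allLE => /allP /(_ (bitsOf X) (allvecsP (size_bitsOf X))).
by rewrite (connected_cut K3 conn).
Qed.
End Sets2.

Import Order.TTheory GRing.Theory Num.Theory.

Definition i0 : 'I_3 := @Ordinal 3 0 isT.
Definition i1 : 'I_3 := @Ordinal 3 1 isT.
Definition i2 : 'I_3 := @Ordinal 3 2 isT.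

Lemma sum3 (V : zmodType) (f : 'I_3 -> V) : (\sum_(k < 3) f k = f i0 + f i1 + f i2)%R.
Proof.
rewrite !big_ord_recr big_ord0 /= add0r.
by congr (_ + _ + _)%R; congr f; apply: val_inj.
Qed.

Lemma sum3n (f : 'I_3 -> nat) : (\sum_(k < 3) f k = f i0 + f i1 + f i2)%N.
Proof.
rewrite !big_ord_recr big_ord0 /= ?add0n.
by congr (_ + _ + _)%N; congr f; apply: val_inj.
Qed.

Lemma split_cnt m (S : {ffun 'I_3 -> {set 'I_m}}) (x : 'I_m) : is_split S ->
  (\sum_(k < 3) (x \in S k) = 1)%N.
Proof.
move=> /and3P [_ /forallP disj /eqP cov].
have : x \in \bigcup_(i < 3) S i by rewrite cov inE.
move=> /bigcupP [k _ xk].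
rewrite (bigD1 k) //= xk big1 // => j njk.
have := disj j => /forallP /(_ k); rewrite njk /= => dj.
by rewrite (disjointFl dj xk).
Qed.

Local Open Scope ring_scope.

Section Real.
Variable R : realFieldType.
Variable m : nat.
Variable w : 'I_m -> R.
Hypothesis Hw : forall g, 0 <= w g.

Lemma util_ge0 (S : {set 'I_m}) : 0 <= util w S.
Proof. by apply: sumr_ge0 => g _; exact: Hw. Qed.

Lemma util_mono (S T : {set 'I_m}) : S \subset T -> util w S <= util w T.
Proof.
move=> /subsetP ST; rewrite /util big_mkcond [X in _ <= X]big_mkcond /=.
apply: ler_sum => g _; case: ifP => gS; first by rewrite (ST g gS).
by case: ifP => _; [exact: Hw | exact: lexx].
Qed.

Lemma util_split (P : {ffun 'I_3 -> {set 'I_m}}) : is_split P ->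
  \sum_(k < 3) util w (P k) = util w [set: 'I_m].
Proof.
move=> sp; rewrite /util.
under eq_bigr => k _ do rewrite big_mkcond /=.
rewrite exchange_big /= [RHS]big_mkcond /=; apply: eq_bigr => g _.
rewrite inE; have := split_cnt g sp.
rewrite sum3n sum3; case: (g \in P i0); case: (g \in P i1); case: (g \in P i2) => //= _;
  by rewrite ?addr0 ?add0r.
Qed.

Definition gval (P : {ffun 'I_3 -> {set 'I_m}}) : R :=
  \big[Num.min/util w [set: 'I_m]]_(i < 3) util w (P i).

Lemma bigmin_le (I : eqType) (r : seq I) (f : I -> R) x j :
  j \in r -> \big[Num.min/x]_(i <- r) f i <= f j.
Proof.
elim: r => // a r IH; rewrite in_cons big_cons => /orP [/eqP -> | jr].
  by rewrite ge_min lexx.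
by rewrite ge_min (IH jr) orbT.
Qed.

Lemma gval_le P k : gval P <= util w (P k).
Proof. exact: bigmin_le (mem_index_enum k). Qed.

Lemma mms_le3 : (mms 3 w) *+ 3 <= util w [set: 'I_m].
Proof.
rewrite /mms; apply: (big_ind (fun x => x *+ 3 <= util w [set: 'I_m])).
- by rewrite mul0rn; exact: util_ge0.
- by move=> x y Hx Hy; rewrite maxEle; case: ifP.
- move=> P sp; rewrite -[X in _ <= X](util_split sp) sum3 mulrS mulrS mulr1n addrA.
  by apply: lerD; [apply: lerD|]; exact: gval_le.
Qed.


Lemma mms_F3 (P : {ffun 'I_3 -> {set 'I_m}}) : is_split P ->
  exists k, mms 3 w <= util w (P k).
Proof.
move=> sp; have H := mms_le3; rewrite -(util_split sp) sum3 in H.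
case: (leP (mms 3 w) (util w (P i0))) => [h|h0]; first by exists i0.
case: (leP (mms 3 w) (util w (P i1))) => [h|h1]; first by exists i1.
case: (leP (mms 3 w) (util w (P i2))) => [h|h2]; first by exists i2.
have : util w (P i0) + util w (P i1) + util w (P i2) < mms 3 w *+ 3.
  by rewrite mulrS mulrS mulr1n addrA ltrD // ltrD.
by rewrite ltNge H.
Qed.

Lemma mms_attained : mms 3 w = 0 \/ exists2 P, is_split P & mms 3 w = gval P.
Proof.
rewrite /mms; apply: (big_ind (fun x => x = 0 \/ exists2 P, is_split P & x = gval P)).
- by left.
- by move=> x y Hx Hy; rewrite maxEle; case: ifP.
- by move=> P sp; right; exists P.
Qed.
End Real.

Definition mkP m (t : trip) : {ffun 'I_3 -> {set 'I_m}} :=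
  [ffun k : 'I_3 => set_of m (nth [::] (bl t) k)].

Lemma cnt_part3 (t : trip) x : part3 t.1.1 t.1.2 t.2 ->
  (\sum_(k < 3) nth false (nth [::] (bl t) k) x = (x < size t.1.1))%N.
Proof. by rewrite sum3n /=; case/part3_spec => _ _ ->. Qed.

Lemma mkP_split m A t : allL (fun v => size v == m) A -> K2b m A -> t \in OSof A ->
  is_split (mkP m t).
Proof.
move=> Hsz K2 /OSofP [a1 a2 a3 p3].
have inA : forall k : 'I_3, nth [::] (bl t) k \in A.
  by case=> [[|[|[|//]]] Hk] /=.
have sz : size t.1.1 = m by move: Hsz; rewrite allLE => /allP /(_ _ a1) /eqP.
have cnt := cnt_part3 _ p3; rewrite sz in cnt.
apply/and3P; split.
- by apply/forallP => k; rewrite ffunE; exact: arcs_connected K2 (inA k).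
- apply/forallP => i; apply/forallP => j; apply/implyP => ij; rewrite !ffunE.
  rewrite disjoint_subset; apply/subsetP => x; rewrite !inE => xi; apply/negP => xj.
  have := cnt x; rewrite ltn_ord (bigD1 i) //= xi (bigD1 j) /=; last by rewrite eq_sym.
  by rewrite xj.
- apply/eqP/setP => x; rewrite inE; apply/bigcupP.
  case: (pickP (fun k : 'I_3 => nth false (nth [::] (bl t) k) x)) => [k Hk | H0].
    by exists k => //; rewrite ffunE in_set_of.
  have := cnt x; rewrite ltn_ord big1 // => k _; by rewrite H0.
Qed.

Lemma main_gen m (Hc : check_all m) (R : realFieldType) (u : 'I_3 -> 'I_m -> R)
    (Hu : forall i g, 0 <= u i g) :
  exists P : {ffun 'I_3 -> {set 'I_m}},
    is_split P /\ forall i : 'I_3, mms 3 (u i) <= util (u i) (P i).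
Proof.
move: Hc; rewrite /check_all; cbv beta zeta.
set A := arcs m; set O := OSof A; set U := USof A O.
move=> /andP [Hsz /andP [K2 /andP [K3 /andP [K4 /andP [Hrep /andP [HU Hck]]]]]].
pose F := fun (i : nat) (v : seq bool) =>
  is_true (mms 3 (u (inord i)) <= util (u (inord i)) (set_of m v)).
have Fup : forall i v w, subb v w -> F i v -> F i w.
  move=> i v w sw; rewrite /F => h; apply: le_trans h _; apply: util_mono => //.
  by apply/subsetP => x; rewrite !in_set_of; exact: subb_nth sw x.
have F3 : forall i X, (i < 3)%N -> X \in U -> exists2 x, x \in bl X & F i x.
  move=> i X _ XU; have XO := USof_sub XU.
  have [k Hk] := mms_F3 (Hu (inord i)) (mkP_split Hsz K2 XO).
  exists (nth [::] (bl X) k); first by apply: mem_nth; rewrite /= ltn_ord.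
  by move: Hk; rewrite ffunE.
have Hag : forall i, (i < 3)%N -> exists2 u0, u0 \in U & forall b, b \in bl u0 -> F i b.
  move=> i _; case: (mms_attained (u (inord i))) => [z | [S sp Seq]].
    have [u0 u0U] : exists u0, u0 \in U.
      by move: HU; case: (U) => // a l _; exists a; rewrite inE eqxx.
    by exists u0 => // b _; rewrite /F z; exact: util_ge0.
  have conS : forall k, connected_set (S k).
    by move=> k; move: sp => /and3P [/forallP Hk _ _]; exact: Hk.
  have inA : forall k, bitsOf (S k) \in A.
    by move=> k; exact: connected_arc K3 K4 (conS k).
  have p3 : part3 (bitsOf (S i0)) (bitsOf (S i1)) (bitsOf (S i2)).
    apply: part3_intro; rewrite ?size_bitsOf // => x xm.
    have := split_cnt (Ordinal xm) sp; rewrite sum3n.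
    by move: (nth_bitsOf (S i0) (Ordinal xm)) (nth_bitsOf (S i1) (Ordinal xm))
      (nth_bitsOf (S i2) (Ordinal xm)) => /= -> -> ->.
  have tO := mem_OSof (inA i0) (inA i1) (inA i2) p3.
  move: Hrep; rewrite allLE => /allP /(_ _ tO); rewrite hasLE => /hasP [u0 u0U pe].
  exists u0 => // b bu; have : b \in bl ((bitsOf (S i0), bitsOf (S i1)), bitsOf (S i2)).
    by rewrite (perm_mem pe).
  rewrite !inE => /or3P [/eqP->|/eqP->|/eqP->]; rewrite /F set_of_bitsOf Seq;
    exact: gval_le.
have [u1 U1 H1] := Hag 0%N erefl.
have [u2 U2 H2] := Hag 1%N erefl.
have [u3 U3 H3] := Hag 2%N erefl.
have [p pO [F0 F1 F2]] := checkOU_sound Fup Hck F3 U1 U2 U3 H1 H2 H3.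
exists (mkP m p); split; first exact: mkP_split Hsz K2 pO.
move=> i; rewrite ffunE.
have E : forall j (Hj : (j < 3)%N), inord j = Ordinal Hj.
  by move=> j Hj; apply: val_inj; rewrite /= inordK.
by case: i => [[|[|[|//]]] Hi] /=; [move: F0 | move: F1 | move: F2]; rewrite /F E.
Qed.


Lemma chk0 : check_all 0. Proof. by vm_compute. Qed.
Lemma chk1 : check_all 1. Proof. by vm_compute. Qed.
Lemma chk2 : check_all 2. Proof. by vm_compute. Qed.
Lemma chk3 : check_all 3. Proof. by vm_compute. Qed.
Lemma chk4 : check_all 4. Proof. by vm_compute. Qed.
Lemma chk5 : check_all 5. Proof. by vm_compute. Qed.
Lemma chk6 : check_all 6. Proof. by vm_compute. Qed.
Lemma chk7 : check_all 7. Proof. by vm_compute. Qed.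
Lemma chk8 : check_all 8. Proof. by vm_compute. Qed.

Theorem theorem2p4 (R : realFieldType) (m : nat) (Hm : (m <= 8)%N)
    (u : 'I_3 -> 'I_m -> R) (Hu : forall i g, 0 <= u i g) :
  exists P : {ffun 'I_3 -> {set 'I_m}},
    is_split P /\ forall i : 'I_3, mms 3 (u i) <= util (u i) (P i).
Proof.
move: u Hu; case: m Hm => [|[|[|[|[|[|[|[|[|m]]]]]]]]] Hm u Hu //.
- exact: (@main_gen 0 chk0 R u Hu).
- exact: (@main_gen 1 chk1 R u Hu).
- exact: (@main_gen 2 chk2 R u Hu).
- exact: (@main_gen 3 chk3 R u Hu).
- exact: (@main_gen 4 chk4 R u Hu).
- exact: (@main_gen 5 chk5 R u Hu).
- exact: (@main_gen 6 chk6 R u Hu).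
- exact: (@main_gen 7 chk7 R u Hu).
- exact: (@main_gen 8 chk8 R u Hu).
Qed.
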